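(* Let $x\in\mathbb{D}$. If $\sup_{\tau\in[0,1]}\#\mathbb{B}_\tau(x)=0$, then $\mathfrak{T}_{rim}$ is jointly $J_1$-continuous at $x$. Consequently, for $r\in\mathbb{N}$, $\mathfrak{T}^{(r)}_{rim}$ is jointly $J_1$-continuous at $x$ if $\sup_{\tau\in[0,1]}\#\mathbb{B}_\tau(\mathfrak{T}^{(j)}_{rim}(x))=0$ for all $j=0,\dots,r-1$.
   Context: $\mathbb{D}=\mathbb{D}([0,1],\mathbb{R})$ is the space of càdlàg functions on $[0,1]$ with the Skorokhod $J_1$-topology, $\|x\|=\sup_{0\le\tau\le1}|x(\tau)|$. $\Lambda$ is the set of continuous strictly increasing $\lambda:[0,1]\to[0,1]$ with $\lambda(0)=0,\lambda(1)=1$; $I$ is the identity. $\Psi:\mathbb{D}\to\mathbb{D}$ is jointly $J_1$-continuous at $x$ if for every sequence $x_n\to x$ in $J_1$ there exist $\lambda_n\in\Lambda$ such that simultaneously $\|\lambda_n-I\|\to0$, $\|x_n\circ\lambda_n-x\|\to0$ and $\|\Psi(x_n)\circ\lambda_n-\Psi(x)\|\to0$. For $x\in\mathbb{D}$, $\Delta x(\tau)=x(\tau)-x(\tau-)$ ($\tau>0$), $\Delta x(0)=0$, and $\widetilde{\mathcal{S}}_\Delta(x)(\tau)=\sup_{0\le s\le\tau}|\Delta x(s)|$. The last modulus record time is $\widetilde L_\tau(x)=\sup\{s\in[0,\tau]:|\Delta x(s)|=\widetilde{\mathcal{S}}_\Delta(x)(\tau)\}$, $\tau\in[0,1]$. The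 signed largest trimmer is $\mathfrak{T}_{rim}(x)(\tau)=x(\tau)-\Delta x(\widetilde L_\tau(x))$; $\mathfrak{T}^{(0)}_{rim}(x)=x$, $\mathfrak{T}^{(1)}_{rim}=\mathfrak{T}_{rim}$, $\mathfrak{T}^{(r)}_{rim}(x)=\mathfrak{T}_{rim}(\mathfrak{T}^{(r-1)}_{rim}(x))$. Let $\widetilde{\mathbb{A}}_\tau(x)=\{0<s\le\tau:|\Delta x(s)|=\widetilde{\mathcal{S}}_\Delta(x)(\tau)\}$ (a finite set, empty by convention if $x$ is continuous on $[0,\tau]$); writing $\widetilde{\mathbb{A}}_\tau(x)=\{s_1<\dots<s_N\}$, let $\mathbb{B}_\tau(x)=\{s_k\in\widetilde{\mathbb{A}}_\tau(x):\Delta x(s_k)=-\Delta x(s_{k-1}),\ k=2,\dots,N\}$ be the set of sign-changing largest modulus jumps. *)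

(* Defs.v *)
From Stdlib Require Import Reals ClassicalEpsilon.
Open Scope R_scope.

(* Functions on [0,1] are represented as R -> R; only values on [0,1] matter. *)
Definition in01 (t : R) : Prop := 0 <= t <= 1.

Definition is_left_lim (x : R -> R) (t l : R) : Prop :=
  forall eps, 0 < eps -> exists d, 0 < d /\
    forall s, 0 <= s -> t - d < s < t -> Rabs (x s - l) < eps.

Definition cadlag (x : R -> R) : Prop :=
  (forall t, 0 <= t < 1 -> forall eps, 0 < eps -> exists d, 0 < d /\
      forall s, t <= s < t + d -> s <= 1 -> Rabs (x s - x t) < eps) /\
  (forall t, 0 < t <= 1 -> exists l, is_left_lim x t l).

Definition leftlim (x : R -> R) (t : R) : R :=
  epsilon (inhabits 0) (fun l => is_left_lim x t l).

Definition Delta (x : R -> R) (t : R) : R :=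
  if Rle_dec t 0 then 0 else x t - leftlim x t.

Definition SDelta (x : R -> R) (tau : R) : R :=
  epsilon (inhabits 0)
    (is_lub (fun m => exists s, 0 <= s <= tau /\ m = Rabs (Delta x s))).

Definition Lrec (x : R -> R) (tau : R) : R :=
  epsilon (inhabits 0)
    (is_lub (fun s => 0 <= s <= tau /\ Rabs (Delta x s) = SDelta x tau)).

Definition trim (x : R -> R) : R -> R :=
  fun tau => x tau - Delta x (Lrec x tau).

Definition trim_iter (r : nat) (x : R -> R) : R -> R := Nat.iter r trim x.

(* tilde A_tau(x), with the convention that it is empty when
   x is continuous on [0,tau] (i.e. SDelta x tau = 0). *)
Definition Aset (x : R -> R) (tau s : R) : Prop :=
  0 < SDelta x tau /\ 0 < s <= tau /\ Rabs (Delta x s) = SDelta x tau.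

Definition Bset (x : R -> R) (tau s : R) : Prop :=
  Aset x tau s /\
  exists s', Aset x tau s' /\ s' < s /\
    (forall u, Aset x tau u -> ~ (s' < u < s)) /\
    Delta x s = - Delta x s'.

Definition unif_cv (f : nat -> R -> R) (g : R -> R) : Prop :=
  forall eps, 0 < eps -> exists N, forall n, (N <= n)%nat ->
    forall t, in01 t -> Rabs (f n t - g t) <= eps.

Definition in_Lambda (l : R -> R) : Prop :=
  l 0 = 0 /\ l 1 = 1 /\
  (forall t, in01 t -> in01 (l t)) /\
  (forall s t, in01 s -> in01 t -> s < t -> l s < l t) /\
  (forall t, in01 t -> forall eps, 0 < eps -> exists d, 0 < d /\
     forall s, in01 s -> Rabs (s - t) < d -> Rabs (l s - l t) < eps).

Definition J1_cv (xn : nat -> R -> R) (x : R -> R) : Prop :=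
  exists ln : nat -> R -> R, (forall n, in_Lambda (ln n)) /\
    unif_cv ln (fun t => t) /\
    unif_cv (fun n t => xn n (ln n t)) x.

Definition jointly_J1_continuous_at (Psi : (R -> R) -> (R -> R)) (x : R -> R) : Prop :=
  forall xn : nat -> R -> R, (forall n, cadlag (xn n)) -> J1_cv xn x ->
  exists ln : nat -> R -> R, (forall n, in_Lambda (ln n)) /\
    unif_cv ln (fun t => t) /\
    unif_cv (fun n t => xn n (ln n t)) x /\
    unif_cv (fun n t => Psi (xn n) (ln n t)) (Psi x).

Definition no_sign_change (x : R -> R) : Prop :=
  forall tau, in01 tau -> forall s, ~ Bset x tau s.

(* Main.v *)
From Pilot Require Import Defs.
From Stdlib Require Import Reals Lra Lia ClassicalEpsilon Classical List.
Import Pilot.Defs.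
Open Scope R_scope.

Lemma tri a b c e1 e2 : Rabs (a - b) <= e1 -> Rabs (b - c) <= e2 -> Rabs (a - c) <= e1 + e2.
Proof. intros. split_Rabs; lra. Qed.

Lemma Delta0 (z : R -> R) : Delta z 0 = 0.
Proof. unfold Delta; destruct (Rle_dec 0 0); [reflexivity| lra]. Qed.

Lemma Delta_pos (z : R -> R) t : 0 < t -> Delta z t = z t - leftlim z t.
Proof. intro H; unfold Delta; destruct (Rle_dec t 0); [lra|reflexivity]. Qed.

Lemma pick_left a t d : a < t -> 0 < d -> 0 < t ->
  exists u, a < u < t /\ t - d < u /\ 0 <= u.
Proof.
  intros Ha Hd Ht.
  set (m := Rmax a (Rmax (t - d) 0)).
  assert (Hm : m < t). { unfold m. apply Rmax_lub_lt; [lra| apply Rmax_lub_lt; lra]. }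
  assert (H1 := Rmax_l a (Rmax (t-d) 0)). assert (H2 := Rmax_r a (Rmax (t-d) 0)).
  assert (H3 := Rmax_l (t-d) 0). assert (H4 := Rmax_r (t-d) 0).
  exists ((m + t)/2). fold m in H1, H2. split; [split|split]; lra.
Qed.

Lemma left_lim_bound (z : R -> R) t l a c e : 0 < t -> a < t -> is_left_lim z t l ->
  (forall u, a < u < t -> 0 <= u -> Rabs (z u - c) <= e) -> Rabs (l - c) <= e.
Proof.
  intros Ht Ha Hl Hb.
  destruct (Rle_lt_dec (Rabs (l - c)) e) as [|Hgt]; auto.
  destruct (Hl ((Rabs (l - c) - e)/2)) as [d [Hd Hd']]; [lra|].
  destruct (pick_left a t d Ha Hd Ht) as [u [Hu1 [Hu2 Hu3]]].
  specialize (Hd' u Hu3 (conj Hu2 (proj2 Hu1))). specialize (Hb u Hu1 Hu3).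
  rewrite Rabs_minus_sym in Hd'.
  assert (H := tri l (z u) c _ _ (Rlt_le _ _ Hd') Hb). lra.
Qed.

Lemma left_lim_unique (z : R -> R) t l1 l2 : 0 < t -> is_left_lim z t l1 -> is_left_lim z t l2 -> l1 = l2.
Proof.
  intros Ht H1 H2.
  assert (forall e, 0 < e -> Rabs (l1 - l2) <= e).
  { intros e He. destruct (H2 e He) as [d [Hd Hd']].
    apply (left_lim_bound z t l1 (t - d) l2 e Ht); [lra|exact H1|].
    intros u Hu Hu0. left. apply Hd'; lra. }
  destruct (Req_dec l1 l2) as [|Hne]; auto.
  assert (Hp : 0 < Rabs (l1 - l2)) by (apply Rabs_pos_lt; intro; apply Hne; lra).
  assert (Hh : 0 < Rabs (l1 - l2) / 2) by lra. specialize (H _ Hh). lra.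
Qed.

Lemma leftlim_spec (z : R -> R) t : cadlag z -> 0 < t <= 1 -> is_left_lim z t (leftlim z t).
Proof. intros [_ Hl] Ht. unfold leftlim. apply epsilon_spec. apply Hl; exact Ht. Qed.

Lemma left_small (z : R -> R) t eps : cadlag z -> 0 < t <= 1 -> 0 < eps ->
  exists d, 0 < d /\ forall s, 0 <= s -> t - d < s < t -> Rabs (Delta z s) <= eps.
Proof.
  intros Hz Ht He. destruct Hz as [Hr Hl0].
  destruct (Hl0 t Ht) as [l Hl].
  destruct (Hl (eps/2)) as [d [Hd Hd']]; [lra|].
  exists d; split; auto. intros s Hs0 Hs.
  destruct Hs0 as [Hsp|<-]; [| rewrite Delta0, Rabs_R0; lra].
  rewrite Delta_pos by exact Hsp.
  assert (Hs1 : 0 < s <= 1) by lra.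
  assert (HL := leftlim_spec z s (conj Hr Hl0) Hs1).
  assert (H1 : Rabs (leftlim z s - l) <= eps/2).
  { apply (left_lim_bound z s _ (t - d) l); auto; try lra.
    intros u Hu Hu0. left. apply Hd'; lra. }
  assert (H2 : Rabs (z s - l) < eps/2) by (apply Hd'; lra).
  rewrite Rabs_minus_sym in H1.
  assert (H := tri (z s) l (leftlim z s) _ _ (Rlt_le _ _ H2) H1). lra.
Qed.

Lemma right_small (z : R -> R) t eps : cadlag z -> 0 <= t < 1 -> 0 < eps ->
  exists d, 0 < d /\ forall s, t < s < t + d -> s <= 1 -> Rabs (Delta z s) <= eps.
Proof.
  intros Hz Ht He. destruct Hz as [Hr Hl0].
  destruct (Hr t Ht (eps/2)) as [d [Hd Hd']]; [lra|].
  exists d; split; auto. intros s Hs Hs1.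
  assert (Hsp : 0 < s) by lra.
  rewrite Delta_pos by exact Hsp.
  assert (HL := leftlim_spec z s (conj Hr Hl0) (conj Hsp Hs1)).
  assert (H1 : Rabs (leftlim z s - z t) <= eps/2).
  { apply (left_lim_bound z s _ t (z t)); auto; try lra.
    intros u Hu Hu0. left. apply Hd'; lra. }
  assert (H2 : Rabs (z s - z t) < eps/2) by (apply Hd'; lra).
  rewrite Rabs_minus_sym in H1.
  assert (H := tri (z s) (z t) (leftlim z s) _ _ (Rlt_le _ _ H2) H1). lra.
Qed.

Lemma jump_small (z : R -> R) : cadlag z -> forall t, in01 t -> forall eps, 0 < eps ->
  exists d, 0 < d /\ forall s, in01 s -> s <> t -> Rabs (s - t) < d -> Rabs (Delta z s) <= eps.
Proof.
  intros Hz t Ht eps He. unfold in01 in *.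
  destruct (Req_dec t 0) as [Ht0|Ht0].
  - subst t. destruct (right_small z 0 eps Hz ltac:(lra) He) as [d [Hd Hd']].
    exists d; split; auto. intros s Hs Hsn Hsd. apply Hd'; try lra.
    split; [lra|]. rewrite Rminus_0_r in Hsd. apply Rabs_def2 in Hsd. lra.
  - destruct (Req_dec t 1) as [Ht1|Ht1].
    + subst t. destruct (left_small z 1 eps Hz ltac:(lra) He) as [d [Hd Hd']].
      exists d; split; auto. intros s Hs Hsn Hsd. apply Hd'; try lra.
      apply Rabs_def2 in Hsd. lra.
    + destruct (left_small z t eps Hz ltac:(lra) He) as [d1 [Hd1 Hd1']].
      destruct (right_small z t eps Hz ltac:(lra) He) as [d2 [Hd2 Hd2']].
      exists (Rmin d1 d2); split. { apply Rmin_pos; auto. }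
      intros s Hs Hsn Hsd. apply Rabs_def2 in Hsd.
      assert (Hm1 := Rmin_l d1 d2). assert (Hm2 := Rmin_r d1 d2).
      destruct (Rlt_or_le s t).
      * apply Hd1'; lra.
      * apply Hd2'; lra.
Qed.

Lemma exists_above (S : R -> Prop) c a : is_lub S c -> a < c -> exists t, S t /\ a < t.
Proof.
  intros [Hub Hlub] Ha. apply NNPP. intro Hn.
  assert (is_upper_bound S a).
  { intros t Ht. destruct (Rle_lt_dec t a); auto. exfalso; apply Hn; exists t; auto. }
  specialize (Hlub a H). lra.
Qed.

Lemma finite_jumps (z : R -> R) : cadlag z -> forall eps, 0 < eps ->
  exists l : list R, forall s, in01 s -> eps < Rabs (Delta z s) -> In s l.
Proof.
  intros Hz eps He.
  set (S := fun tau => 0 <= tau <= 1 /\ exists l : list R, forall s, 0 <= s <= tau ->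
            eps < Rabs (Delta z s) -> In s l).
  assert (HS0 : S 0).
  { split; [lra|]. exists nil. intros s Hs Hj. replace s with 0 in Hj by lra.
    rewrite Delta0, Rabs_R0 in Hj. lra. }
  assert (Hb : bound S). { exists 1. intros t [Ht _]. lra. }
  destruct (completeness S Hb (ex_intro _ 0 HS0)) as [c Hc].
  assert (Hc0 : 0 <= c) by (apply (proj1 Hc); exact HS0).
  assert (Hc1 : c <= 1) by (apply (proj2 Hc); intros t [Ht _]; lra).
  destruct (jump_small z Hz c (conj Hc0 Hc1) eps He) as [d [Hd Hd']].
  destruct (exists_above S c (c - d) Hc ltac:(lra)) as [t0 [[Ht0 [l0 Hl0]] Ht0d]].
  set (t := Rmin 1 (c + d/2)).
  assert (Htm1 := Rmin_l 1 (c + d/2)). assert (Htm2 := Rmin_r 1 (c + d/2)).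
  assert (Ht0c : t0 <= c) by (apply (proj1 Hc); split; [lra| exists l0; auto]).
  assert (HSt : S t).
  { split. { fold t in Htm1, Htm2. split; [|lra]. apply Rmin_glb; lra. }
    exists (c :: l0). intros s Hs Hj.
    destruct (Rle_lt_dec s t0) as [Hst0|Hst0].
    - right. apply Hl0; auto. lra.
    - destruct (Req_dec s c) as [->|Hsc]; [left; reflexivity|].
      exfalso. assert (Rabs (Delta z s) <= eps); [|lra].
      apply Hd'; auto. { unfold in01. fold t in Htm1, Htm2. lra. }
      apply Rabs_def1; fold t in Htm1, Htm2; lra. }
  assert (Htc : t <= c) by (apply (proj1 Hc); exact HSt).
  assert (Hc1' : c = 1).
  { destruct (Rle_lt_dec 1 (c + d/2)).
    - unfold t in Htc. rewrite Rmin_left in Htc by lra. lra.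
    - unfold t in Htc. rewrite Rmin_right in Htc by lra. lra. }
  assert (Ht1 : t = 1) by (unfold t; rewrite Rmin_left; lra).
  rewrite Ht1 in HSt. destruct HSt as [_ [l Hl]].
  exists l. intros s Hs Hj. apply Hl; auto.
Qed.

Lemma list_argmax (l : list R) (P : R -> Prop) (f : R -> R) :
  (exists u, In u l /\ P u) -> exists u, In u l /\ P u /\ forall v, In v l -> P v -> f v <= f u.
Proof.
  induction l as [|a l IH]; intros [u [Hu Pu]].
  - destruct Hu.
  - destruct (classic (exists u, In u l /\ P u)) as [Hex|Hn].
    + destruct (IH Hex) as [w [Hw [Pw Hmax]]].
      destruct (classic (P a /\ f w <= f a)) as [[Pa Hle]|Hno].
      * exists a. split; [left; auto|split; auto].
        intros v [<-|Hv] Pv; [lra| specialize (Hmax v Hv Pv); lra].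
      * exists w. split; [right; auto| split; auto].
        intros v [<-|Hv] Pv; [|auto].
        apply Rnot_lt_le. intro Hlt. apply Hno. split; auto. lra.
    + destruct Hu as [<-|Hu]; [|exfalso; apply Hn; eauto].
      exists a. split; [left; auto|split; auto].
      intros v [<-|Hv] Pv; [lra| exfalso; apply Hn; eauto].
Qed.

Lemma list_bound (f : R -> R) (l : list R) : exists B, forall u, In u l -> f u <= B.
Proof.
  induction l as [|a l [B HB]].
  - exists 0. intros u [].
  - exists (Rmax (f a) B). intros u [<-|Hu].
    + apply Rmax_l.
    + specialize (HB u Hu). assert (H := Rmax_r (f a) B). lra.
Qed.

Lemma pos_min (m : list R) : exists g, 0 < g /\ forall v, In v m -> 0 < v -> g <= v.
Proof.
  induction m as [|a m [g [Hg HG]]].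
  - exists 1. split; [lra| intros v []].
  - destruct (Rlt_dec 0 a) as [Ha|Ha].
    + exists (Rmin a g). split; [apply Rmin_pos; auto|].
      intros v [<-|Hv] Hv0. { apply Rmin_l. }
      specialize (HG v Hv Hv0). assert (H := Rmin_r a g). lra.
    + exists g. split; auto. intros v [<-|Hv] Hv0; [lra| auto].
Qed.

Definition SS (z : R -> R) tau := fun m => exists s, 0 <= s <= tau /\ m = Rabs (Delta z s).
Definition AA (z : R -> R) tau := fun s => 0 <= s <= tau /\ Rabs (Delta z s) = SDelta z tau.

Lemma SDelta_lub (z : R -> R) tau : cadlag z -> in01 tau -> is_lub (SS z tau) (SDelta z tau).
Proof.
  intros Hz Ht. unfold SDelta. apply epsilon_spec. fold (SS z tau).
  destruct (finite_jumps z Hz 1 ltac:(lra)) as [l Hl].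
  destruct (list_bound (fun u => Rabs (Delta z u)) l) as [B HB].
  assert (Hb : bound (SS z tau)).
  { exists (Rmax 1 B). intros m [s [Hs ->]].
    assert (H1 := Rmax_l 1 B). assert (H2 := Rmax_r 1 B).
    destruct (Rle_lt_dec (Rabs (Delta z s)) 1); [lra|].
    assert (In s l) by (apply Hl; auto; unfold in01 in *; lra).
    specialize (HB s H). simpl in HB. lra. }
  assert (Hne : exists m, SS z tau m).
  { exists (Rabs (Delta z 0)). exists 0. unfold in01 in Ht. split; [lra|auto]. }
  destruct (completeness _ Hb Hne) as [m Hm]. exists m; exact Hm.
Qed.

Lemma SDelta_ub (z : R -> R) tau s : cadlag z -> in01 tau -> 0 <= s <= tau ->
  Rabs (Delta z s) <= SDelta z tau.
Proof. intros Hz Ht Hs. apply (proj1 (SDelta_lub z tau Hz Ht)). exists s; auto. Qed.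

Lemma SDelta_nonneg (z : R -> R) tau : cadlag z -> in01 tau -> 0 <= SDelta z tau.
Proof.
  intros Hz Ht. assert (H := SDelta_ub z tau 0 Hz Ht).
  rewrite Delta0, Rabs_R0 in H. apply H. unfold in01 in Ht; lra.
Qed.

Lemma SDelta_eq (z : R -> R) tau m : cadlag z -> in01 tau ->
  (forall s, 0 <= s <= tau -> Rabs (Delta z s) <= m) ->
  (exists s, 0 <= s <= tau /\ Rabs (Delta z s) = m) -> SDelta z tau = m.
Proof.
  intros Hz Ht Hub [s0 [Hs0 Hm]].
  apply (is_lub_u (SS z tau)); [apply SDelta_lub; auto|].
  split.
  - intros v [s [Hs ->]]. auto.
  - intros b Hb. rewrite <- Hm. apply Hb. exists s0; auto.
Qed.

Lemma SDelta_attained (z : R -> R) tau : cadlag z -> in01 tau ->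
  exists s, 0 <= s <= tau /\ Rabs (Delta z s) = SDelta z tau.
Proof.
  intros Hz Ht. set (M := SDelta z tau).
  assert (HM0 : 0 <= M) by (apply SDelta_nonneg; auto).
  destruct (Rle_lt_dec M 0) as [HM|HM].
  - exists 0. unfold in01 in Ht. split; [lra|]. rewrite Delta0, Rabs_R0. lra.
  - destruct (finite_jumps z Hz (M/2) ltac:(lra)) as [l Hl].
    assert (Hlub := SDelta_lub z tau Hz Ht). fold M in Hlub.
    destruct (exists_above _ _ (M/2) Hlub ltac:(lra)) as [m [[s [Hs ->]] Hm]].
    destruct (list_argmax l (fun u => 0 <= u <= tau /\ M/2 < Rabs (Delta z u))
               (fun u => Rabs (Delta z u))) as [u [Hu [[Hu1 Hu2] Hmax]]].
    { exists s. split; [apply Hl; auto; unfold in01 in *; lra| split; auto]. }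
    exists u. split; auto. apply Rle_antisym.
    + apply SDelta_ub; auto.
    + apply (proj2 Hlub). intros v [s' [Hs' ->]].
      destruct (Rle_lt_dec (Rabs (Delta z s')) (M/2)); [lra|].
      apply Hmax; [apply Hl; auto; unfold in01 in *; lra| split; auto].
Qed.

Lemma Lrec_spec (z : R -> R) tau : cadlag z -> in01 tau ->
  AA z tau (Lrec z tau) /\ forall s, AA z tau s -> s <= Lrec z tau.
Proof.
  intros Hz Ht. set (M := SDelta z tau).
  assert (HM0 : 0 <= M) by (apply SDelta_nonneg; auto).
  assert (Hex : exists L, is_lub (AA z tau) L /\ AA z tau L).
  { destruct (Rle_lt_dec M 0) as [HM|HM].
    - exists tau. assert (HA : AA z tau tau).
      { unfold in01 in Ht. split; [lra|]. fold M.
        assert (H := SDelta_ub z tau tau Hz (conj (proj1 Ht) (proj2 Ht)) ltac:(lra)).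
        fold M in H. assert (H' := Rabs_pos (Delta z tau)). lra. }
      split; auto. split.
      + intros s [Hs _]. lra.
      + intros b Hb. apply Hb; auto.
    - destruct (finite_jumps z Hz (M/2) ltac:(lra)) as [l Hl].
      destruct (SDelta_attained z tau Hz Ht) as [s0 [Hs0 Hs0M]].
      assert (Hin : forall s, AA z tau s -> In s l).
      { intros s [Hs HsM]. apply Hl; [unfold in01 in *; lra|]. fold M in HsM. lra. }
      destruct (list_argmax l (AA z tau) (fun u => u)) as [u [Hu [HAu Hmax]]].
      { exists s0. split; [apply Hin|]; split; auto. }
      exists u. split; auto. split.
      + intros v Hv. apply Hmax; auto.
      + intros b Hb. apply Hb; auto. }
  destruct Hex as [L [HL HAL]].
  assert (HLr : Lrec z tau = L).
  { apply (is_lub_u (AA z tau)); auto. unfold Lrec. apply epsilon_spec. exists L. exact HL. }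
  rewrite HLr. split; auto. intros s Hs. apply (proj1 HL); auto.
Qed.

Lemma Lrec_eq (z : R -> R) tau L : cadlag z -> in01 tau ->
  AA z tau L -> (forall s, AA z tau s -> s <= L) -> Lrec z tau = L.
Proof.
  intros Hz Ht HL Hmax. destruct (Lrec_spec z tau Hz Ht) as [H1 H2].
  apply Rle_antisym; auto.
Qed.

Lemma Lrec_jump (z : R -> R) tau : cadlag z -> in01 tau ->
  0 <= Lrec z tau <= tau /\ Rabs (Delta z (Lrec z tau)) = SDelta z tau.
Proof. intros Hz Ht. apply (Lrec_spec z tau Hz Ht). Qed.

Lemma SDelta_mono (z : R -> R) a b : cadlag z -> 0 <= a -> a <= b -> b <= 1 ->
  SDelta z a <= SDelta z b.
Proof.
  intros Hz Ha Hab Hb.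
  destruct (SDelta_attained z a Hz ltac:(unfold in01; lra)) as [s [Hs Hs']].
  rewrite <- Hs'. apply SDelta_ub; auto; unfold in01; lra.
Qed.

Lemma abs_eq_cases p q : Rabs p = Rabs q -> p = q \/ p = - q.
Proof.
  intro H. destruct (Rcase_abs p) as [Hp|Hp]; destruct (Rcase_abs q) as [Hq|Hq].
  - rewrite (Rabs_left p Hp), (Rabs_left q Hq) in H. left; lra.
  - rewrite (Rabs_left p Hp), (Rabs_right q Hq) in H. right; lra.
  - rewrite (Rabs_right p Hp), (Rabs_left q Hq) in H. right; lra.
  - rewrite (Rabs_right p Hp), (Rabs_right q Hq) in H. left; lra.
Qed.

Lemma opp_gives_B (x : R -> R) tau a b : cadlag x -> in01 tau -> 0 < SDelta x tau ->
  0 <= a <= tau -> 0 <= b <= tau -> Rabs (Delta x a) = SDelta x tau ->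
  Rabs (Delta x b) = SDelta x tau -> Delta x a <> Delta x b -> exists s, Bset x tau s.
Proof.
  intros Hx Ht HM Ha Hb HaM HbM Hab.
  set (M := SDelta x tau) in *.
  destruct (finite_jumps x Hx (M/2) ltac:(lra)) as [l Hl].
  assert (Hin : forall u, Aset x tau u -> In u l).
  { intros u [_ [Hu HuM]]. apply Hl; [unfold in01 in *; lra|]. fold M in HuM. lra. }
  assert (Hpos : forall u, 0 <= u -> Rabs (Delta x u) = M -> 0 < u).
  { intros u Hu HuM. destruct Hu as [Hu|<-]; auto. rewrite Delta0, Rabs_R0 in HuM. lra. }
  assert (HAa : Aset x tau a) by (split; auto; split; [split; [apply Hpos|]|]; tauto).
  assert (HAb : Aset x tau b) by (split; auto; split; [split; [apply Hpos|]|]; tauto).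
  set (Q := fun u => Aset x tau u /\ exists w, Aset x tau w /\ w < u /\ Delta x w <> Delta x u).
  destruct (list_argmax l Q (fun u => - u)) as [c [Hc [[HAc [w [HAw [Hwc Hwne]]]] Hcmin]]].
  { destruct (Rtotal_order a b) as [Hlt|[Heq|Hgt]].
    - exists b. split; [apply Hin; auto|]. split; auto. exists a. auto.
    - subst b. contradiction.
    - exists a. split; [apply Hin; auto|]. split; auto. exists b. split; [auto|split; auto]. }
  destruct (list_argmax l (fun u => Aset x tau u /\ u < c) (fun u => u))
    as [d [Hd [[HAd Hdc] Hdmax]]].
  { exists w. split; [apply Hin; auto| split; auto]. }
  assert (Hdne : Delta x d <> Delta x c).
  { intro Heq. assert (Hwd : w <= d) by (apply Hdmax; [apply Hin|split]; auto).
    destruct Hwd as [Hwd|Hwd].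
    - assert (HQd : Q d) by (split; auto; exists w; split; [auto|split; [auto| rewrite Heq; auto]]).
      specialize (Hcmin d Hd HQd). simpl in Hcmin. lra.
    - subst w. apply Hwne. exact Heq. }
  exists c. split; auto. exists d. split; auto. split; auto. split.
  - intros u HAu [Hdu Huc]. assert (u <= d) by (apply Hdmax; [apply Hin|split]; auto). lra.
  - destruct HAc as [_ [_ HcM]]. destruct HAd as [_ [_ HdM]].
    destruct (abs_eq_cases (Delta x c) (Delta x d)) as [H|H]; [congruence| |exact H].
    exfalso; apply Hdne; auto.
Qed.

Lemma gap_lemma (x : R -> R) : cadlag x -> no_sign_change x -> forall eta, 0 < eta ->
  exists g, 0 < g /\ forall tau, in01 tau -> eta <= SDelta x tau -> forall s, 0 <= s <= tau ->
    SDelta x tau - g <= Rabs (Delta x s) -> Delta x s = Delta x (Lrec x tau).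
Proof.
  intros Hx Hn eta He.
  destruct (finite_jumps x Hx (eta/2) ltac:(lra)) as [l Hl].
  destruct (pos_min (map (fun p => Rabs (Rabs (Delta x (fst p)) - Rabs (Delta x (snd p))))
                        (list_prod l l))) as [g0 [Hg0 HG]].
  exists (Rmin g0 (eta/4) / 2). split. { assert (H := Rmin_pos g0 (eta/4) Hg0 ltac:(lra)). lra. }
  intros tau Ht HM s Hs Hsg.
  assert (Hm1 := Rmin_l g0 (eta/4)). assert (Hm2 := Rmin_r g0 (eta/4)).
  destruct (Lrec_jump x tau Hx Ht) as [HL HLM].
  set (L := Lrec x tau) in *. set (M := SDelta x tau) in *.
  assert (Hsub : Rabs (Delta x s) <= M) by (apply SDelta_ub; auto).
  assert (HsL : In s l) by (apply Hl; [unfold in01 in *; lra| lra]).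
  assert (HLl : In L l) by (apply Hl; [unfold in01 in *; lra| lra]).
  assert (HeqM : Rabs (Delta x s) = M).
  { destruct (Rle_lt_dec M (Rabs (Delta x s))) as [|Hlt]; [lra|].
    exfalso.
    assert (Hin : In (Rabs (Rabs (Delta x s) - Rabs (Delta x L))) (map (fun p => Rabs (Rabs (Delta x (fst p)) - Rabs (Delta x (snd p)))) (list_prod l l))).
    { apply (in_map (fun p => Rabs (Rabs (Delta x (fst p)) - Rabs (Delta x (snd p)))) _ (s, L)).
      apply in_prod; auto. }
    rewrite HLM in Hin. fold M in Hin.
    rewrite Rabs_left in Hin by lra.
    specialize (HG _ Hin ltac:(lra)). lra. }
  destruct (Req_dec (Delta x s) (Delta x L)) as [|Hne]; auto.
  exfalso. destruct (opp_gives_B x tau s L Hx Ht ltac:(fold M; lra) Hs HL HeqM HLM Hne) as [u Hu].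
  apply (Hn tau Ht u Hu).
Qed.

Lemma two_lims (y x : R -> R) s ly lx d : 0 < s <= 1 -> is_left_lim y s ly -> is_left_lim x s lx ->
  (forall t, in01 t -> Rabs (y t - x t) <= d) -> Rabs (ly - lx) <= d.
Proof.
  intros Hs Hy Hx Hd.
  destruct (Rle_lt_dec (Rabs (ly - lx)) d) as [|Hgt]; auto. exfalso.
  set (k := (Rabs (ly - lx) - d)/2).
  destruct (Hy k ltac:(unfold k; lra)) as [d1 [Hd1 Hd1']].
  destruct (Hx k ltac:(unfold k; lra)) as [d2 [Hd2 Hd2']].
  destruct (pick_left (s - d1) s d2 ltac:(lra) Hd2 ltac:(lra)) as [u [Hu1 [Hu2 Hu3]]].
  assert (H1 := Hd1' u Hu3 ltac:(lra)). assert (H2 := Hd2' u Hu3 ltac:(lra)).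
  assert (H3 := Hd u ltac:(unfold in01; lra)).
  clear Hd1' Hd2' Hd Hy Hx. unfold k in *. split_Rabs; lra.
Qed.

Lemma Delta_close (y x : R -> R) d : cadlag y -> cadlag x ->
  (forall t, in01 t -> Rabs (y t - x t) <= d) -> forall s, in01 s -> Rabs (Delta y s - Delta x s) <= 2 * d.
Proof.
  intros Hy Hx Hd s Hs.
  assert (Hd0 : 0 <= d) by (assert (H := Hd 0 ltac:(unfold in01; lra)); assert (H' := Rabs_pos (y 0 - x 0)); lra).
  unfold in01 in Hs. destruct (proj1 Hs) as [Hsp|<-].
  2: { rewrite !Delta0. rewrite Rminus_0_r, Rabs_R0. lra. }
  rewrite !Delta_pos by exact Hsp.
  assert (Hs' : 0 < s <= 1) by lra.
  assert (H1 := two_lims y x s _ _ d Hs' (leftlim_spec y s Hy Hs') (leftlim_spec x s Hx Hs') Hd).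
  assert (H2 := Hd s ltac:(unfold in01; lra)). clear Hd.
  split_Rabs; lra.
Qed.

Lemma main_lemma (x : R -> R) (y : nat -> R -> R) : cadlag x -> no_sign_change x ->
  (forall n, cadlag (y n)) -> unif_cv y x -> unif_cv (fun n => trim (y n)) (trim x).
Proof.
  intros Hx Hn Hy Hcv eps He.
  destruct (gap_lemma x Hx Hn (eps/4) ltac:(lra)) as [g [Hg Hgap]].
  set (d := Rmin (eps/8) (g/8)).
  assert (Hd1 := Rmin_l (eps/8) (g/8)). assert (Hd2 := Rmin_r (eps/8) (g/8)).
  assert (Hd0 : 0 < d) by (apply Rmin_pos; lra).
  destruct (Hcv d Hd0) as [N HN]. exists N. intros n Hnn tau Ht.
  specialize (HN n Hnn). fold d in Hd1, Hd2.
  assert (HD := Delta_close (y n) x d (Hy n) Hx HN).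
  destruct (Lrec_jump (y n) tau (Hy n) Ht) as [HLy HLyM].
  destruct (Lrec_jump x tau Hx Ht) as [HLx HLxM].
  set (Ly := Lrec (y n) tau) in *. set (Lx := Lrec x tau) in *.
  set (My := SDelta (y n) tau) in *. set (Mx := SDelta x tau) in *.
  assert (HLy01 : in01 Ly) by (unfold in01 in *; lra).
  assert (HLx01 : in01 Lx) by (unfold in01 in *; lra).
  assert (A1 := HD Ly HLy01). assert (A2 := HD Lx HLx01).
  assert (B1 : Rabs (Delta x Ly) <= Mx) by (apply SDelta_ub; auto).
  assert (B2 : Rabs (Delta (y n) Lx) <= My) by (apply SDelta_ub; auto).
  assert (C : Rabs (Delta (y n) Ly - Delta x Lx) <= 2 * d + eps / 2).
  { destruct (Rle_lt_dec (eps/4) Mx) as [HM|HM].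
    - assert (Heq : Delta x Ly = Delta x Lx).
      { apply Hgap; auto. fold Mx. clear - A1 A2 B1 B2 HLyM HLxM Hd2 Hd0.
        clearbody d Ly Lx My Mx. split_Rabs; lra. }
      rewrite <- Heq. lra.
    - assert (Hd3 : Rabs (Delta x Ly - Delta x Lx) <= eps/2).
      { clear - B1 HLxM HM. split_Rabs; lra. }
      assert (H := tri _ _ _ _ _ A1 Hd3). lra. }
  assert (H0 := HN tau Ht).
  unfold trim. fold Ly Lx. clear - C H0 Hd1 Hd0 He.
  split_Rabs; lra.
Qed.

Lemma lam_le (l : R -> R) s t : in_Lambda l -> in01 s -> in01 t -> s <= t -> l s <= l t.
Proof.
  intros [_ [_ [_ [Hm _]]]] Hs Ht [Hst|<-]; [left; apply Hm; auto| right; reflexivity].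
Qed.

Lemma lam_inv (l : R -> R) s t : in_Lambda l -> in01 s -> in01 t -> l s <= l t -> s <= t.
Proof.
  intros [_ [_ [_ [Hm _]]]] Hs Ht H. destruct (Rle_lt_dec s t) as [|Hlt]; auto.
  specialize (Hm t s Ht Hs Hlt). lra.
Qed.

Lemma comp_leftlim (z l : R -> R) t L : in_Lambda l -> 0 < t <= 1 -> is_left_lim z (l t) L ->
  is_left_lim (fun s => z (l s)) t L.
Proof.
  intros Hl Ht HL eps He.
  destruct Hl as [Hl0 [Hl1 [Hmap [Hm Hc]]]].
  destruct (HL eps He) as [d1 [Hd1 Hd1']].
  destruct (Hc t ltac:(unfold in01; lra) d1 Hd1) as [d2 [Hd2 Hd2']].
  exists (Rmin d2 t). split; [apply Rmin_pos; lra|].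
  assert (Hm1 := Rmin_l d2 t). assert (Hm2 := Rmin_r d2 t).
  intros s Hs0 Hs.
  assert (Hs01 : in01 s) by (unfold in01; lra).
  assert (H1 := Hd2' s Hs01 ltac:(apply Rabs_def1; lra)).
  assert (H2 : l s < l t) by (apply Hm; auto; unfold in01; lra).
  assert (H3 := Hmap s Hs01). unfold in01 in H3.
  apply Hd1'; [lra|]. apply Rabs_def2 in H1. lra.
Qed.

Lemma comp_cadlag (z l : R -> R) : cadlag z -> in_Lambda l -> cadlag (fun s => z (l s)).
Proof.
  intros Hz Hl. assert (Hl' := Hl). destruct Hl' as [Hl0 [Hl1 [Hmap [Hm Hc]]]]. split.
  - intros t Ht eps He.
    assert (Ht01 : in01 t) by (unfold in01; lra).
    assert (Hlt : l t < 1) by (rewrite <- Hl1; apply Hm; auto; unfold in01; lra).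
    assert (Hlt0 := Hmap t Ht01). unfold in01 in Hlt0.
    destruct (proj1 Hz (l t) ltac:(lra) eps He) as [d1 [Hd1 Hd1']].
    destruct (Hc t Ht01 d1 Hd1) as [d2 [Hd2 Hd2']].
    exists d2. split; auto. intros s Hs Hs1.
    assert (Hs01 : in01 s) by (unfold in01; lra).
    assert (H1 := Hd2' s Hs01 ltac:(apply Rabs_def1; lra)).
    assert (H2 : l t <= l s) by (apply lam_le; auto; lra).
    assert (H3 := Hmap s Hs01). unfold in01 in H3.
    apply Rabs_def2 in H1. apply Hd1'; lra.
  - intros t Ht.
    assert (Hlt : 0 < l t) by (rewrite <- Hl0; apply Hm; unfold in01; lra).
    assert (Hlt1 := Hmap t ltac:(unfold in01; lra)). unfold in01 in Hlt1.
    destruct (proj2 Hz (l t) ltac:(lra)) as [L HL].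
    exists L. apply comp_leftlim; auto.
Qed.

Lemma comp_Delta (z l : R -> R) s : cadlag z -> in_Lambda l -> in01 s ->
  Delta (fun u => z (l u)) s = Delta z (l s).
Proof.
  intros Hz Hl Hs. assert (Hl' := Hl). destruct Hl' as [Hl0 [Hl1 [Hmap [Hm Hc]]]].
  unfold in01 in Hs. destruct (proj1 Hs) as [Hsp|<-].
  2: { rewrite Hl0, !Delta0. reflexivity. }
  assert (Hls : 0 < l s) by (rewrite <- Hl0; apply Hm; unfold in01; lra).
  assert (Hls1 := Hmap s ltac:(unfold in01; lra)). unfold in01 in Hls1.
  rewrite !Delta_pos by auto. f_equal.
  apply (left_lim_unique (fun u => z (l u)) s); auto.
  - apply leftlim_spec; [apply comp_cadlag; auto| lra].
  - apply comp_leftlim; auto; [lra|]. apply leftlim_spec; auto; lra.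
Qed.

Lemma lam_surj (l : R -> R) v : in_Lambda l -> 0 <= v <= 1 -> exists s, in01 s /\ l s = v.
Proof.
  intros Hl Hv. assert (Hl' := Hl). destruct Hl' as [Hl0 [Hl1 [Hmap [Hm Hc]]]].
  set (S := fun s => 0 <= s <= 1 /\ l s <= v).
  assert (HS0 : S 0) by (split; [lra| rewrite Hl0; lra]).
  assert (Hb : bound S) by (exists 1; intros t [Ht _]; lra).
  destruct (completeness S Hb (ex_intro _ 0 HS0)) as [c Hcl].
  assert (Hc0 : 0 <= c) by (apply (proj1 Hcl); exact HS0).
  assert (Hc1 : c <= 1) by (apply (proj2 Hcl); intros t [Ht _]; lra).
  assert (Hc01 : in01 c) by (unfold in01; lra).
  exists c. split; auto.
  destruct (Rtotal_order (l c) v) as [Hlt|[Heq|Hgt]]; auto; exfalso.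
  - assert (Hc1' : c < 1) by (destruct (Req_dec c 1) as [->|]; [lra| lra]).
    destruct (Hc c Hc01 (v - l c) ltac:(lra)) as [d [Hd Hd']].
    set (s := Rmin 1 (c + d/2)).
    assert (Hm1 := Rmin_l 1 (c + d/2)). assert (Hm2 := Rmin_r 1 (c + d/2)).
    assert (Hs : c < s) by (unfold s; apply Rmin_glb_lt; lra).
    assert (Hs01 : in01 s) by (unfold in01; fold s in Hm1, Hm2; lra).
    assert (H1 := Hd' s Hs01 ltac:(apply Rabs_def1; fold s in Hm1, Hm2; lra)).
    apply Rabs_def2 in H1.
    assert (S s) by (unfold in01 in Hs01; split; [lra|lra]).
    assert (s <= c) by (apply (proj1 Hcl); auto). lra.
  - destruct (Hc c Hc01 (l c - v) ltac:(lra)) as [d [Hd Hd']].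
    assert (Hub : is_upper_bound S (c - d)).
    { intros s [Hs Hls]. assert (s <= c) by (apply (proj1 Hcl); split; auto).
      destruct (Rle_lt_dec s (c - d)) as [|Hlt]; auto. exfalso.
      assert (H1 := Hd' s ltac:(unfold in01; lra) ltac:(apply Rabs_def1; lra)).
      apply Rabs_def2 in H1. lra. }
    assert (c <= c - d) by (apply (proj2 Hcl); auto). lra.
Qed.

Lemma comm_trim (z l : R -> R) tau : cadlag z -> in_Lambda l -> in01 tau ->
  trim (fun u => z (l u)) tau = trim z (l tau).
Proof.
  intros Hz Hl Ht. assert (Hl' := Hl). destruct Hl' as [Hl0 [Hl1 [Hmap [Hm Hc]]]].
  set (y := fun u => z (l u)).
  assert (Hy : cadlag y) by (unfold y; apply comp_cadlag; auto).
  assert (HD : forall s, in01 s -> Delta y s = Delta z (l s)) .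
  { intros s Hs. unfold y. apply comp_Delta; auto. }
  assert (Hlt := Hmap tau Ht).
  destruct (Lrec_jump y tau Hy Ht) as [HLy HLyM].
  set (Ly := Lrec y tau) in *.
  assert (HLy01 : in01 Ly) by (unfold in01 in *; lra).
  assert (Hle : l Ly <= l tau) by (apply lam_le; auto; lra).
  assert (HlLy := Hmap Ly HLy01).
  assert (HM : SDelta z (l tau) = SDelta y tau).
  { apply SDelta_eq; auto.
    - intros u Hu. destruct (lam_surj l u Hl ltac:(unfold in01 in *; lra)) as [s [Hs <-]].
      assert (s <= tau) by (apply (lam_inv l); auto; lra).
      rewrite <- HD by auto. apply SDelta_ub; auto. unfold in01 in Hs; lra.
    - exists (l Ly). split; [unfold in01 in *; lra|]. rewrite <- HD; auto. }
  assert (HL : Lrec z (l tau) = l Ly).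
  { apply Lrec_eq; auto.
    - split; [unfold in01 in *; lra|]. rewrite HM, <- HD; auto.
    - intros u [Hu HuM]. destruct (lam_surj l u Hl ltac:(unfold in01 in *; lra)) as [s [Hs <-]].
      assert (Hst : s <= tau) by (apply (lam_inv l); auto; lra).
      apply lam_le; auto. apply (proj2 (Lrec_spec y tau Hy Ht)).
      split; [unfold in01 in Hs; lra|]. rewrite HD, <- HM; auto. }
  unfold trim. fold Ly. rewrite HL, HD; auto.
Qed.

Lemma stab (z : R -> R) a b : cadlag z -> 0 <= a -> a <= b -> b <= 1 -> 0 < SDelta z a ->
  (forall s, a < s <= b -> Rabs (Delta z s) < SDelta z a) ->
  SDelta z b = SDelta z a /\ Lrec z b = Lrec z a.
Proof.
  intros Hz Ha Hab Hb HM Hj.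
  assert (Ha01 : in01 a) by (unfold in01; lra).
  assert (Hb01 : in01 b) by (unfold in01; lra).
  destruct (Lrec_jump z a Hz Ha01) as [HLa HLaM].
  assert (HMb : SDelta z b = SDelta z a).
  { apply SDelta_eq; auto.
    - intros s Hs. destruct (Rle_lt_dec s a).
      + apply SDelta_ub; auto. lra.
      + left. apply Hj. lra.
    - exists (Lrec z a). split; auto. lra. }
  split; auto.
  apply Lrec_eq; auto.
  - split; [lra|]. rewrite HMb; auto.
  - intros s [Hs HsM]. rewrite HMb in HsM.
    destruct (Rle_lt_dec s a) as [Hsa|Hsa].
    + apply (proj2 (Lrec_spec z a Hz Ha01)). split; auto. lra.
    + specialize (Hj s ltac:(lra)). lra.
Qed.

Lemma cadlag_sub (f g : R -> R) : cadlag f -> cadlag g -> cadlag (fun t => f t - g t).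
Proof.
  intros [Hfr Hfl] [Hgr Hgl]. split.
  - intros t Ht eps He.
    destruct (Hfr t Ht (eps/2) ltac:(lra)) as [d1 [Hd1 Hd1']].
    destruct (Hgr t Ht (eps/2) ltac:(lra)) as [d2 [Hd2 Hd2']].
    exists (Rmin d1 d2). split; [apply Rmin_pos; auto|].
    assert (Hm1 := Rmin_l d1 d2). assert (Hm2 := Rmin_r d1 d2).
    intros s Hs Hs1.
    assert (H1 := Hd1' s ltac:(lra) Hs1). assert (H2 := Hd2' s ltac:(lra) Hs1).
    clear - H1 H2. split_Rabs; lra.
  - intros t Ht. destruct (Hfl t Ht) as [lf Hlf]. destruct (Hgl t Ht) as [lg Hlg].
    exists (lf - lg). intros eps He.
    destruct (Hlf (eps/2) ltac:(lra)) as [d1 [Hd1 Hd1']].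
    destruct (Hlg (eps/2) ltac:(lra)) as [d2 [Hd2 Hd2']].
    exists (Rmin d1 d2). split; [apply Rmin_pos; auto|].
    assert (Hm1 := Rmin_l d1 d2). assert (Hm2 := Rmin_r d1 d2).
    intros s Hs0 Hs.
    assert (H1 := Hd1' s Hs0 ltac:(lra)). assert (H2 := Hd2' s Hs0 ltac:(lra)).
    clear - H1 H2. split_Rabs; lra.
Qed.

Lemma G_cadlag (z : R -> R) : cadlag z -> cadlag (fun t => Delta z (Lrec z t)).
Proof.
  intros Hz. split.
  - intros t Ht eps He.
    assert (Ht01 : in01 t) by (unfold in01; lra).
    assert (HM0 := SDelta_nonneg z t Hz Ht01).
    destruct (Rle_lt_dec (SDelta z t) 0) as [HM|HM].
    + destruct (jump_small z Hz t Ht01 (eps/2) ltac:(lra)) as [d [Hd Hd']].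
      exists d. split; auto. intros s Hs Hs1.
      assert (Hs01 : in01 s) by (unfold in01; lra).
      destruct (Lrec_jump z s Hz Hs01) as [HLs HLsM].
      destruct (Lrec_jump z t Hz Ht01) as [HLt HLtM].
      assert (Hb : SDelta z s <= eps/2).
      { rewrite <- HLsM. destruct (Rle_lt_dec (Lrec z s) t) as [Hle|Hlt].
        - assert (H := SDelta_ub z t (Lrec z s) Hz Ht01 ltac:(lra)). lra.
        - apply Hd'; [unfold in01; lra| lra|]. apply Rabs_def1; lra. }
      assert (HMs := SDelta_nonneg z s Hz Hs01).
      rewrite <- HLsM in Hb. rewrite <- HLtM in HM. clear - Hb HM He.
      split_Rabs; lra.
    + destruct (jump_small z Hz t Ht01 (SDelta z t / 2) ltac:(lra)) as [d [Hd Hd']].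
      exists d. split; auto. intros s Hs Hs1.
      destruct (Req_dec s t) as [->|Hst]. { rewrite Rminus_diag, Rabs_R0; lra. }
      destruct (stab z t s Hz ltac:(lra) ltac:(lra) Hs1 HM) as [_ HL].
      { intros u Hu. assert (Rabs (Delta z u) <= SDelta z t / 2); [|lra].
        apply Hd'; [unfold in01; lra| lra|]. apply Rabs_def1; lra. }
      rewrite HL, Rminus_diag, Rabs_R0; lra.
  - intros t Ht.
    destruct (classic (exists t0, 0 <= t0 < t /\ 0 < SDelta z t0)) as [[t0 [Ht0 Hm0]]|Hno].
    + destruct (jump_small z Hz t ltac:(unfold in01; lra) (SDelta z t0 / 2) ltac:(lra)) as [d [Hd Hd']].
      set (t1 := Rmax t0 (t - d/2)).
      assert (Hr1 := Rmax_l t0 (t - d/2)). assert (Hr2 := Rmax_r t0 (t - d/2)).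
      assert (Ht1 : t1 < t) by (unfold t1; apply Rmax_lub_lt; lra).
      fold t1 in Hr1, Hr2.
      assert (Hmono := SDelta_mono z t0 t1 Hz ltac:(lra) Hr1 ltac:(lra)).
      exists (Delta z (Lrec z t1)). intros eps He. exists (t - t1). split; [lra|].
      intros s Hs0 Hs.
      destruct (stab z t1 s Hz ltac:(lra) ltac:(lra) ltac:(lra) ltac:(lra)) as [_ HL].
      { intros u Hu. assert (Rabs (Delta z u) <= SDelta z t0 / 2); [|lra].
        apply Hd'; [unfold in01; lra| lra|]. apply Rabs_def1; lra. }
      rewrite HL, Rminus_diag, Rabs_R0; lra.
    + exists 0. intros eps He. exists t. split; [lra|]. intros s Hs0 Hs.
      assert (Hs01 : in01 s) by (unfold in01; lra).
      assert (HM := SDelta_nonneg z s Hz Hs01).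
      destruct (Lrec_jump z s Hz Hs01) as [_ HLsM].
      assert (SDelta z s <= 0).
      { destruct (Rle_lt_dec (SDelta z s) 0); auto. exfalso. apply Hno. exists s. split; auto; lra. }
      rewrite Rminus_0_r, HLsM. lra.
Qed.

Lemma trim_cadlag (z : R -> R) : cadlag z -> cadlag (trim z).
Proof.
  intro Hz. change (cadlag (fun t => z t - (fun t => Delta z (Lrec z t)) t)).
  apply cadlag_sub; auto. apply G_cadlag; auto.
Qed.

Lemma unif_cv_ext (f1 f2 : nat -> R -> R) g : (forall n t, in01 t -> f1 n t = f2 n t) ->
  unif_cv f2 g -> unif_cv f1 g.
Proof.
  intros He Hc eps Heps. destruct (Hc eps Heps) as [N HN]. exists N.
  intros n Hn t Ht. rewrite He by auto. apply HN; auto.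
Qed.

Lemma iter_S j z : trim_iter (S j) z = trim (trim_iter j z).
Proof. reflexivity. Qed.

Lemma iter_lemma r (x : R -> R) (xn ln : nat -> R -> R) : cadlag x ->
  (forall j, (j < r)%nat -> no_sign_change (trim_iter j x)) ->
  (forall n, cadlag (xn n)) -> (forall n, in_Lambda (ln n)) ->
  unif_cv (fun n t => xn n (ln n t)) x ->
  forall j, (j <= r)%nat -> cadlag (trim_iter j x) /\ (forall n, cadlag (trim_iter j (xn n))) /\
    unif_cv (fun n t => trim_iter j (xn n) (ln n t)) (trim_iter j x).
Proof.
  intros Hx Hns Hxn Hl Hcv j. induction j as [|j IH]; intros Hj.
  - simpl. auto.
  - destruct (IH ltac:(lia)) as [H1 [H2 H3]].
    split; [rewrite iter_S; apply trim_cadlag; auto|].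
    split; [intro n; rewrite iter_S; apply trim_cadlag; auto|].
    apply (unif_cv_ext _ (fun n t => trim (fun u => trim_iter j (xn n) (ln n u)) t)).
    { intros n t Ht. rewrite iter_S. symmetry. apply comm_trim; auto. }
    rewrite iter_S.
    assert (Hn : no_sign_change (trim_iter j x)) by (apply Hns; lia).
    assert (Hc : forall n, cadlag (fun u => trim_iter j (xn n) (ln n u))) by (intro n; apply comp_cadlag; auto).
    exact (main_lemma (trim_iter j x) (fun n u => trim_iter j (xn n) (ln n u)) H1 Hn Hc H3).
Qed.

Theorem theorem2p1 :
  (forall x : R -> R, cadlag x -> no_sign_change x ->
     jointly_J1_continuous_at trim x) /\
  (forall (r : nat) (x : R -> R), cadlag x ->
     (forall j, (j < r)%nat -> no_sign_change (trim_iter j x)) ->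
     jointly_J1_continuous_at (trim_iter r) x).
Proof.
  split.
  - intros x Hx Hn xn Hxn [ln [Hl [Hid Hcv]]].
    exists ln. split; auto. split; auto. split; auto.
    destruct (iter_lemma 1 x xn ln Hx ltac:(intros j Hj; replace j with 0%nat by lia; exact Hn)
                Hxn Hl Hcv 1%nat ltac:(lia)) as [_ [_ H]].
    exact H.
  - intros r x Hx Hns xn Hxn [ln [Hl [Hid Hcv]]].
    exists ln. split; auto. split; auto. split; auto.
    destruct (iter_lemma r x xn ln Hx Hns Hxn Hl Hcv r ltac:(lia)) as [_ [_ H]].
    exact H.
Qed.
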